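(* Let $G$ and $H$ be two graphs on the same vertex set $V$ such that $d(G,H)\le e$, and assume $\lambda_1(H)>\lambda_2(H)$. Let $\mathbf{x}$ and $\mathbf{y}$ be unit (in $\ell_2$) nonnegative Perron–Frobenius eigenvectors of the adjacency matrices of $G$ and $H$, respectively. Then $$\sum_{v\in V}(x_v-y_v)^2\le\frac{8\sqrt{e}}{\lambda_1(H)-\lambda_2(H)}\qquad\text{and}\qquad \sum_{v\in V}|x_v^2-y_v^2|\le\frac{8e^{1/4}}{\sqrt{\lambda_1(H)-\lambda_2(H)}}.$$
   Context: $d(G,H)$ is the edit distance: the minimum number of edges one must add or delete to transform $G$ into $H$. $\lambda_1(H)\ge\lambda_2(H)\ge\cdots$ are the eigenvalues of the adjacency matrix of $H$. A Perron–Frobenius eigenvector is a nonnegative eigenvector for the largest adjacency eigenvalue. *)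

(* Defs.v *)
From HB Require Import structures.
From mathcomp Require Import all_boot all_order all_algebra.
Set Implicit Arguments. Unset Strict Implicit. Unset Printing Implicit Defensive.
Import Order.TTheory GRing.Theory Num.Theory.
Local Open Scope ring_scope.

Definition simple_graph n (G : rel 'I_n) : Prop := symmetric G /\ irreflexive G.

Definition adjmx (R : rcfType) n (G : rel 'I_n) : 'M[R]_n :=
  \matrix_(i, j) (G i j)%:R.

Definition edit_dist n (G H : rel 'I_n) : nat :=
  #|[set p : 'I_n * 'I_n | (p.1 < p.2)%N && (G p.1 p.2 != H p.1 p.2)]|.

(* s is the list of eigenvalues of A, with multiplicity, in nonincreasing order:
   s`_0 = lambda_1 >= s`_1 = lambda_2 >= ... *)
Definition spectrum (R : rcfType) n (A : 'M[R]_n) (s : seq R) : Prop :=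
  sorted (fun a b => b <= a) s /\ char_poly A = \prod_(a <- s) ('X - a%:P).

Definition PF_eigvec (R : rcfType) n (A : 'M[R]_n) (x : 'rV[R]_n) : Prop :=
  (forall i, 0 <= x 0 i) /\ x != 0 /\
  exists lam : R, x *m A = lam *: x /\ (forall mu, eigenvalue A mu -> mu <= lam).

Definition unit_vec (R : rcfType) n (x : 'rV[R]_n) : Prop :=
  \sum_i x 0 i ^+ 2 = 1.

(* Main.v *)
Require Import Defs.
From HB Require Import structures.
From mathcomp Require Import all_boot all_order all_algebra.
From mathcomp Require Import complex ring lra.
Import Order.TTheory GRing.Theory Num.Theory.
Local Open Scope ring_scope.
Set Implicit Arguments. Unset Strict Implicit. Unset Printing Implicit Defensive.

Section Spec.
Variables (C : numClosedFieldType) (n : nat) (M : 'M[C]_n).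
Local Open Scope sesquilinear_scope.
Hypothesis normM : M \is normalmx.
Let P := spectralmx M.
Let d := spectral_diag M.

Lemma PPt : P *m P ^t* = 1%:M.
Proof. exact/unitarymxP/spectral_unitarymx. Qed.

Lemma PtP : P ^t* *m P = 1%:M.
Proof. by rewrite -invmx_unitary ?spectral_unitarymx // mulVmx ?spectral_unit. Qed.

Lemma Mdec : M = P ^t* *m diag_mx d *m P.
Proof. by rewrite -invmx_unitary ?spectral_unitarymx //; apply/orthomx_spectralP. Qed.

Lemma PM : P *m M = diag_mx d *m P.
Proof. by rewrite {1}Mdec !mulmxA PPt mul1mx. Qed.

Lemma MPt : M *m P ^t* = P ^t* *m diag_mx d.
Proof. by rewrite {1}Mdec -!mulmxA PPt mulmx1. Qed.

Lemma trCmul m p q (A : 'M[C]_(m, p)) (B : 'M[C]_(p, q)) : (A *m B) ^t* = B ^t* *m A ^t*.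
Proof. by rewrite trmx_mul map_mxM. Qed.

Lemma qform (v : 'rV[C]_n) :
  (v *m M *m v ^t*) 0 0 = \sum_k d 0 k * ((v *m P ^t*) 0 k * ((v *m P ^t*) 0 k)^*).
Proof.
rewrite {1}Mdec.
have -> : v *m (P ^t* *m diag_mx d *m P) *m v ^t* =
   (v *m P ^t*) *m diag_mx d *m (v *m P ^t*) ^t*.
  by rewrite trCmul trmxCK !mulmxA.
rewrite mxE; apply: eq_bigr => k _.
by rewrite mul_mx_diag !mxE mulrAC mulrC.
Qed.

Lemma qnorm (v : 'rV[C]_n) :
  (v *m v ^t*) 0 0 = \sum_k ((v *m P ^t*) 0 k * ((v *m P ^t*) 0 k)^*).
Proof.
have -> : v *m v ^t* = (v *m P ^t*) *m (v *m P ^t*) ^t*.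
  by rewrite trCmul trmxCK mulmxA -(mulmxA v) PtP mulmx1.
by rewrite mxE; apply: eq_bigr => k _; rewrite !mxE.
Qed.

Lemma rowP_eig k : row k P *m M = d 0 k *: row k P.
Proof.
by rewrite -row_mul PM mul_diag_mx; apply/rowP => j; rewrite !mxE.
Qed.

Lemma rowP_neq0 k : row k P != 0.
Proof.
apply/eqP => h; have := PPt; move/matrixP/(_ k k).
rewrite !mxE eqxx /= big1 ?(@oner_eq0 C) //.
  by move/esym/eqP; rewrite oner_eq0.
by move=> j _; have /rowP/(_ j) := h; rewrite !mxE => ->; rewrite mul0r.
Qed.

Lemma eig_d k : eigenvalue M (d 0 k).
Proof. by apply/eigenvalueP; exists (row k P); [exact: rowP_eig| exact: rowP_neq0]. Qed.

End Spec.
Lemma char_poly_sim (F : fieldType) n (Q D P : 'M[F]_n) :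
  Q *m P = 1%:M -> char_poly (Q *m D *m P) = char_poly D.
Proof.
move=> QP.
pose Qp := map_mx polyC Q; pose Pp := map_mx polyC P.
have QPp : Qp *m Pp = 1%:M by rewrite -map_mxM QP map_mx1.
have E : char_poly_mx (Q *m D *m P) = Qp *m char_poly_mx D *m Pp.
  rewrite /char_poly_mx !map_mxM mulmxBr mulmxBl -/Qp -/Pp.
  have X : Qp *m (@scalar_mx {poly F} n (polyX F)) *m Pp = (polyX F)%:M.
    by rewrite -mulmxA -scalar_mxC mulmxA QPp mul1mx.
  by rewrite X.
rewrite /char_poly E !det_mulmx mulrAC -det_mulmx QPp det1 mul1r.
done.
Qed.

Lemma char_poly_diag (F : fieldType) n (d : 'rV[F]_n) :
  char_poly (diag_mx d) = \prod_(k < n) ('X - (d 0 k)%:P).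
Proof.
rewrite char_poly_trig ?diag_mx_is_trig //.
by apply: eq_bigr => k _; rewrite mxE eqxx mulr1n.
Qed.

Lemma cnt (T : finType) (a : pred T) : count a (enum T) = #|a|.
Proof. by rewrite cardE /enum_mem size_filter count_filter; apply: eq_count => x; rewrite /= andbT. Qed.

Section Real.
Variable R : rcfType.
Local Open Scope sesquilinear_scope.
Local Notation f := (real_complex R).

Lemma f_real (r : R) : f r \is Num.real.
Proof. by apply/complex_realP; exists r. Qed.

Lemma trC_real m p (A : 'M[R]_(m, p)) : (map_mx f A) ^t* = map_mx f A^T.
Proof. by apply/matrixP => i j; rewrite !mxE conj_Creal // f_real. Qed.

Lemma fq n m (u : 'rV[R]_n) (A : 'M[R]_(n, m)) (v : 'rV[R]_m) :
  f ((u *m A *m v^T) 0 0) = (map_mx f u *m map_mx f A *m (map_mx f v) ^t*) 0 0.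
Proof. rewrite trC_real -!map_mxM [RHS]mxE. reflexivity. Qed.

Lemma fn n (u v : 'rV[R]_n) :
  f ((u *m v^T) 0 0) = (map_mx f u *m (map_mx f v) ^t*) 0 0.
Proof. rewrite trC_real -!map_mxM [RHS]mxE. reflexivity. Qed.

Lemma herm_real n (A : 'M[R]_n) : A^T = A -> map_mx f A \is hermsymmx.
Proof.
move=> sA; apply: realsym_hermsym.
  apply/is_hermitianmxP; rewrite /= expr0 scale1r; apply/matrixP => i j.
  by rewrite !mxE /= -{1}sA mxE.
by apply/mxOverP => i j; rewrite mxE f_real.
Qed.

Lemma rayleigh_top n (A : 'M[R]_n) (mu : R) : A^T = A ->
  (forall a, eigenvalue A a -> a <= mu) ->
  forall u : 'rV[R]_n, (u *m A *m u^T) 0 0 <= mu * (u *m u^T) 0 0.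
Proof.
move=> sA hmu u.
rewrite -lecR rmorphM /= fq fn.
have hA := herm_real sA; have nA := hermitian_normalmx hA.
rewrite (qform nA) (qnorm (map_mx f A)) mulr_sumr; apply: ler_sum => k _.
apply: ler_wpM2r; first exact: mul_conjC_ge0.
have := eig_d nA k.
have /mxOverP/(_ 0 k)/complex_realP[r ->] := hermitian_spectral_diag_real hA.
by rewrite eigenvalue_map lecR => /hmu.
Qed.


Lemma rayleigh_second n (B : 'M[R]_n) (s : seq R) (y z : 'rV[R]_n) :
  B^T = B -> sorted (fun a b => b <= a) s ->
  char_poly B = \prod_(a <- s) ('X - a%:P) -> s`_1 < s`_0 ->
  y != 0 -> y *m B = s`_0 *: y -> (z *m y^T) 0 0 = 0 ->
  (z *m B *m z^T) 0 0 <= s`_1 * (z *m z^T) 0 0.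
Proof.
move=> sB srt cpB gap y0 yB zy.
case: s srt cpB gap yB => [|a0 t] srt cpB gap yB; first by rewrite ltxx in gap.
rewrite /= in yB.
have tle : forall a, a \in t -> a <= (a0 :: t)`_1.
  case: t srt {cpB gap} (gap) => [//|a1 t'] /= /andP[_ pth] _ a.
  rewrite inE => /orP[/eqP->//|]; move: a.
  have := order_path_min (fun y x z (h1 : y <= x) (h2 : z <= y) => le_trans h2 h1) pth.
  by move=> /allP h a /h.
have tlt : forall a, a \in t -> a < a0.
  by move=> a /tle h; apply: le_lt_trans gap.
rewrite /= in gap yB tle tlt *.
rewrite -lecR rmorphM /= fq fn.
have hB := herm_real sB; have nB := hermitian_normalmx hB.
set B' := map_mx f B in hB nB *.
set P := spectralmx B'; set d := spectral_diag B'.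
have cp1 : char_poly B' = \prod_(c <- map f (a0 :: t)) ('X - c%:P).
  by rewrite -map_char_poly cpB rmorph_prod big_map; apply: eq_bigr => a _; exact: map_polyXsubC.
have cp2 : char_poly B' = \prod_(c <- map (d 0) (enum 'I_n)) ('X - c%:P).
  rewrite {1}(Mdec nB) char_poly_sim ?PtP // char_poly_diag big_map big_enum /=.
  by apply: eq_bigl => k; rewrite inE.
have pe : perm_eq (map (d 0) (enum 'I_n)) (map f (a0 :: t)).
  by apply: prod_XsubC_eq; rewrite -cp1 -cp2.
have din : forall k, d 0 k = f a0 \/ exists2 a, a \in t & d 0 k = f a.
  move=> k; have : d 0 k \in map f (a0 :: t).
    by rewrite -(perm_mem pe); apply: map_f; rewrite mem_enum.
  rewrite inE => /orP[/eqP->|/mapP[a at_ ->]]; [by left | by right; exists a].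
have uniqk : forall k1 k2, d 0 k1 = f a0 -> d 0 k2 = f a0 -> k1 = k2.
  have : count (pred1 (f a0)) (map (d 0) (enum 'I_n)) = 1%N.
    rewrite (permP pe) /= eqxx count_map /=.
    rewrite (eq_in_count (a2 := pred0)) ?count_pred0 //.
    move=> a /tlt; rewrite /= (inj_eq (@complexI _)) => h.
    by rewrite lt_eqF.
  rewrite count_map cnt => /eqP; rewrite eqn_leq => /andP[/card_le1_eqP h _].
  by move=> k1 k2 h1 h2; apply: h; rewrite inE /= ?h1 ?h2.
set v := map_mx f y *m P ^t*; set w := map_mx f z *m P ^t*.
have vd : forall k, v 0 k * d 0 k = f a0 * v 0 k.
  move=> k; have : v *m diag_mx d = f a0 *: v.
    by rewrite /v -mulmxA -(MPt nB) mulmxA -map_mxM yB map_mxZ scalemxAl.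
  by move/matrixP/(_ 0 k); rewrite mul_mx_diag !mxE.
have wv : \sum_k w 0 k * (v 0 k)^* = 0.
  have : (map_mx f z *m (map_mx f y) ^t*) 0 0 = 0 by rewrite -fn zy rmorph0.
  have -> : map_mx f z *m (map_mx f y) ^t* = w *m v ^t*.
    by rewrite /w /v trCmul trmxCK mulmxA -(mulmxA _ _ P) PtP mulmx1.
  by rewrite mxE => h; rewrite -[RHS]h; apply: eq_bigr => k _; rewrite !mxE.
have v0 : v != 0.
  apply: contraNneq y0 => hv; rewrite -(map_mx_eq0 (real_complex R)).
  have -> : map_mx f y = v *m P by rewrite /v -mulmxA PtP mulmx1.
  by rewrite hv mul0mx.
rewrite (qform nB) (qnorm B') mulr_sumr -/P -/d -/w; apply: ler_sum => k _.
case: (din k) => [hk | [a at_ ->]]; last first.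
  by apply: ler_wpM2r; [exact: mul_conjC_ge0 | rewrite lecR; exact: tle].
have vj : forall j, j != k -> v 0 j = 0.
  move=> j jk; have := vd j; move/eqP; rewrite mulrC -subr_eq0 -mulrBl mulf_eq0.
  case/orP => [|/eqP //]; rewrite subr_eq0 => /eqP hj.
  by move: jk; rewrite (uniqk _ _ hj hk) eqxx.
have vk : v 0 k != 0.
  apply: contraNneq v0 => hv; apply/eqP/rowP => j; rewrite [RHS]mxE.
  by have [->|jk] := eqVneq j k; [exact: hv | exact: vj].
rewrite (bigD1 k) //= big1 ?addr0 in wv; last first.
  by move=> j jk; rewrite vj // conjC0 mulr0.
move/eqP: wv; rewrite mulf_eq0 conjC_eq0 (negbTE vk) orbF => /eqP ->.
by rewrite mul0r !mulr0.
Qed.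

End Real.

Section RealLemmas.
Variable R : rcfType.

Lemma CS (I : finType) (a b : I -> R) :
  (\sum_i a i * b i) ^+ 2 <= (\sum_i a i ^+ 2) * (\sum_i b i ^+ 2).
Proof.
set A := \sum_i a i ^+ 2; set B := \sum_i b i ^+ 2; set S := \sum_i a i * b i.
have B0 : 0 <= B by apply: sumr_ge0 => i _; exact: sqr_ge0.
have [hB|hB] := eqVneq B 0.
  have bi : forall i, b i = 0.
    move=> i; apply/eqP; rewrite -sqrf_eq0; apply/eqP.
    by apply: (psumr_eq0P _ hB) => // j _; exact: sqr_ge0.
  have -> : S = 0 by rewrite /S big1 // => i _; rewrite bi mulr0.
  by rewrite hB expr0n /= mulr0.
have Bp : 0 < B by rewrite lt_neqAle eq_sym hB B0.
have key : \sum_i (B * a i - S * b i) ^+ 2 = B * (A * B - S ^+ 2).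
  transitivity (\sum_i (B ^+ 2 * a i ^+ 2 - (2 * B * S) * (a i * b i) + S ^+ 2 * b i ^+ 2)).
    by apply: eq_bigr => i _; ring.
  rewrite big_split sumrB /= -!mulr_sumr -/A -/B -/S; ring.
have : 0 <= B * (A * B - S ^+ 2).
  by rewrite -key; apply: sumr_ge0 => i _; exact: sqr_ge0.
rewrite pmulr_rge0 // subr_ge0 => h.
by [].
Qed.

Definition bf n (M : 'M[R]_n) (u v : 'rV[R]_n) := (u *m M *m v^T) 0 0.

Lemma bfE n (M : 'M[R]_n) u v : bf M u v = \sum_i \sum_j u 0 i * M i j * v 0 j.
Proof.
rewrite /bf mxE (exchange_big) /=; apply: eq_bigr => j _.
by rewrite mxE mulr_suml; apply: eq_bigr => i _; rewrite !mxE.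
Qed.

Lemma bfBl n (M : 'M[R]_n) u1 u2 v : bf M (u1 - u2) v = bf M u1 v - bf M u2 v.
Proof. by rewrite /bf !mulmxBl !mxE. Qed.
Lemma bfZl n (M : 'M[R]_n) c u v : bf M (c *: u) v = c * bf M u v.
Proof. by rewrite /bf -!scalemxAl !mxE. Qed.
Lemma bfBr n (M : 'M[R]_n) u v1 v2 : bf M u (v1 - v2) = bf M u v1 - bf M u v2.
Proof. by rewrite /bf linearB /= mulmxBr !mxE. Qed.
Lemma bfZr n (M : 'M[R]_n) c u v : bf M u (c *: v) = c * bf M u v.
Proof. by rewrite /bf linearZ /= -scalemxAr !mxE. Qed.
Lemma bfBM n (M1 M2 : 'M[R]_n) u v : bf (M1 - M2) u v = bf M1 u v - bf M2 u v.
Proof. by rewrite /bf mulmxBr mulmxBl !mxE. Qed.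
Lemma bfsym n (M : 'M[R]_n) u v : M^T = M -> bf M u v = bf M v u.
Proof.
move=> sM; have h : (u *m M *m v^T)^T = v *m M *m u^T by rewrite !trmx_mul trmxK sM mulmxA.
by rewrite /bf -h [RHS]mxE.
Qed.
Lemma bfeig n (M : 'M[R]_n) c u v : u *m M = c *: u -> bf M u v = c * bf 1%:M u v.
Proof. by move=> h; rewrite /bf h mulmx1 -scalemxAl !mxE. Qed.
Lemma bf1E n (u v : 'rV[R]_n) : bf 1%:M u v = \sum_i u 0 i * v 0 i.
Proof. by rewrite /bf mulmx1 mxE; apply: eq_bigr => i _; rewrite !mxE. Qed.
Lemma bf1sym n (u v : 'rV[R]_n) : bf 1%:M u v = bf 1%:M v u.
Proof. by apply: bfsym; rewrite trmx1. Qed.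


Lemma card_diff n (G H : rel 'I_n) : simple_graph G -> simple_graph H ->
  (#|[set p : 'I_n * 'I_n | G p.1 p.2 != H p.1 p.2]| <= 2 * edit_dist G H)%N.
Proof.
move=> [sG iG] [sH iH].
set D := [set p : 'I_n * 'I_n | G p.1 p.2 != H p.1 p.2].
set Dl := [set p : 'I_n * 'I_n | (p.1 < p.2)%N && (G p.1 p.2 != H p.1 p.2)].
have -> : edit_dist G H = #|Dl| by [].
set Dg := [set (p.2, p.1) | p in Dl].
have sub : D \subset Dl :|: Dg.
  apply/subsetP => -[i j]; rewrite !inE /= => hd.
  case: (ltngtP i j) => hij.
  - by rewrite hd.
  - apply/orP; right; apply/imsetP; exists (j, i) => //.
    by rewrite inE /= hij sG sH hd.
  - by move: hd; rewrite (ord_inj hij) iG iH.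
apply: (leq_trans (subset_leq_card sub)).
apply: (leq_trans (leq_card_setU Dl Dg)).
by rewrite mul2n -addnn leq_add2l leq_imset_card.
Qed.

Lemma edit_sq n (G H : rel 'I_n) (u : 'rV[R]_n) : simple_graph G -> simple_graph H ->
  (bf (adjmx R G - adjmx R H) u u) ^+ 2 <= 2 * (edit_dist G H)%:R * (bf 1%:M u u) ^+ 2.
Proof.
move=> sG sH.
set E := adjmx R G - adjmx R H.
have -> : bf E u u = \sum_(p : 'I_n * 'I_n) E p.1 p.2 * (u 0 p.1 * u 0 p.2).
  rewrite bfE pair_bigA /=; apply: eq_bigr => p _; ring.
have -> : bf 1%:M u u ^+ 2 = \sum_(p : 'I_n * 'I_n) (u 0 p.1 * u 0 p.2) ^+ 2.
  rewrite bf1E expr2 mulr_suml -(pair_bigA _ (fun i j => (u 0 i * u 0 j) ^+ 2)) /=; apply: eq_bigr => i _.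
  rewrite mulr_sumr; apply: eq_bigr => j _; ring.
apply: (le_trans (CS _ _)); apply: ler_wpM2r.
  by apply: sumr_ge0 => p _; exact: sqr_ge0.
have -> : \sum_(p : 'I_n * 'I_n) E p.1 p.2 ^+ 2 =
    (#|[set p : 'I_n * 'I_n | G p.1 p.2 != H p.1 p.2]|)%:R.
  rewrite -sum1_card natr_sum [RHS]big_mkcond /=; apply: eq_bigr => p _.
  by rewrite /E !mxE inE; case: (G _ _); case: (H _ _) => /=; rewrite ?subrr ?expr0n // ?subr0 ?sub0r ?sqrrN expr1n.
by rewrite -natrM ler_nat card_diff.
Qed.

End RealLemmas.
Lemma sorted_tail (R : rcfType) (a0 : R) t : sorted (fun a b => b <= a) (a0 :: t) ->
  forall a, a \in t -> a <= t`_0.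
Proof.
case: t => [//|a1 t'] /= /andP[_ pth] a.
rewrite inE => /orP[/eqP->//|]; move: a.
have := order_path_min (fun y x z (h1 : y <= x) (h2 : z <= y) => le_trans h2 h1) pth.
by move=> /allP h a /h.
Qed.

Lemma sym_adj (R : rcfType) n (G : rel 'I_n) : simple_graph G -> (adjmx R G)^T = adjmx R G.
Proof. by move=> [sG _]; apply/matrixP => i j; rewrite !mxE sG. Qed.

Lemma bf1_ge0 (R : rcfType) n (u : 'rV[R]_n) : 0 <= bf 1%:M u u.
Proof. by rewrite bf1E; apply: sumr_ge0 => i _; rewrite -expr2 sqr_ge0. Qed.

Lemma unit_bf (R : rcfType) n (u : 'rV[R]_n) : unit_vec u -> bf 1%:M u u = 1.
Proof. by rewrite /unit_vec bf1E => <-; apply: eq_bigr => i _; rewrite expr2. Qed.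

Unset Implicit Arguments.
Theorem lemma2p2 (R : rcfType) (n : nat) (G H : rel 'I_n) (e : R)
  (sH : seq R) (x y : 'rV[R]_n) :
  simple_graph G -> simple_graph H ->
  (edit_dist G H)%:R <= e ->
  spectrum (adjmx R H) sH ->
  sH`_1 < sH`_0 ->
  PF_eigvec (adjmx R G) x -> unit_vec x ->
  PF_eigvec (adjmx R H) y -> unit_vec y ->
  \sum_i (x 0 i - y 0 i) ^+ 2 <= 8 * Num.sqrt e / (sH`_0 - sH`_1) /\
  \sum_i `|x 0 i ^+ 2 - y 0 i ^+ 2|
    <= 8 * Num.sqrt (Num.sqrt e) / Num.sqrt (sH`_0 - sH`_1).
Proof.
move=> gG gH hde [srt cpB] gap [x0 [xnz [lx [xA hxA]]]] ux [y0 [ynz [ly [yB hyB]]]] uy.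
have symA := sym_adj R gG; have symB := sym_adj R gH.
set A := adjmx R G in xA hxA symA *; set B := adjmx R H in yB hyB symB cpB *.
case: sH srt cpB gap => [|a0 t] srt cpB gap; first by rewrite ltxx in gap.
rewrite /= in gap *.
have tle := sorted_tail srt.
have tlt : forall a, a \in t -> a < a0 by move=> a /tle h; apply: le_lt_trans gap.
have lyE : ly = a0.
  have : root (char_poly B) ly.
    by rewrite -eigenvalue_root_char; apply/eigenvalueP; exists y.
  rewrite cpB root_prod_XsubC inE => /orP[/eqP //|/tlt lylt].
  have : eigenvalue B a0 by rewrite eigenvalue_root_char cpB root_prod_XsubC mem_head.
  by move/hyB; rewrite leNgt lylt.
subst ly.
have ux' := unit_bf ux; have uy' := unit_bf uy.
have e0 : 0 <= e by apply: le_trans hde.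
set e2 := 2 * Num.sqrt e.
have qEb : forall u, bf 1%:M u u = 1 -> `|bf A u u - bf B u u| <= e2.
  move=> u hu; have h := edit_sq u gG gH; rewrite hu expr1n mulr1 in h.
  have h2 : (bf (A - B) u u) ^+ 2 <= e2 ^+ 2.
    by apply: (le_trans h); rewrite /e2 exprMn sqr_sqrtr //; lra.
  have e20 : 0 <= e2 by rewrite /e2 mulr_ge0 ?sqrtr_ge0.
  rewrite -bfBM ler_norml; apply/andP; split; nra.
have qAx : bf A x x = lx by rewrite (bfeig _ xA) ux' mulr1.
have qBy : bf B y y = a0 by rewrite (bfeig _ yB) uy' mulr1.
have qAy : bf A y y <= lx * bf 1%:M y y.
  by rewrite /bf mulmx1; exact: rayleigh_top symA hxA y.
rewrite uy' mulr1 in qAy.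
set al := bf 1%:M x y.
set z := x - al *: y.
have zy : bf 1%:M z y = 0 by rewrite bfBl bfZl uy' mulr1 subrr.
have qBz0 : bf B z z <= t`_0 * bf 1%:M z z.
  rewrite /bf mulmx1; apply: (rayleigh_second symB srt cpB gap ynz yB).
  by move: zy; rewrite /bf mulmx1.
have Byx : bf B y x = a0 * al by rewrite (bfeig _ yB) bf1sym.
have Bxy : bf B x y = a0 * al by rewrite bfsym.
have qBz : bf B z z = bf B x x - al ^+ 2 * a0.
  rewrite /z !bfBl !bfBr !bfZl !bfZr Bxy Byx qBy; ring.
have nz : bf 1%:M z z = 1 - al ^+ 2.
  rewrite /z !bfBl !bfBr !bfZl !bfZr ux' uy' (bf1sym y x) -/al; ring.
have al0 : 0 <= al by rewrite /al bf1E; apply: sumr_ge0 => i _; rewrite mulr_ge0.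
have nz0 : 0 <= 1 - al ^+ 2 by rewrite -nz bf1_ge0.
have hx := qEb x ux'; have hy := qEb y uy'.
move: hx hy; rewrite !ler_norml => /andP[hx1 hx2] /andP[hy1 hy2].
have sqe0 : 0 <= Num.sqrt e by rewrite sqrtr_ge0.
set g := a0 - t`_0.
have g0 : 0 < g by rewrite /g subr_gt0.
have key : (1 - al ^+ 2) * g <= 4 * Num.sqrt e.
  rewrite /g /e2 in hx1 hx2 hy1 hy2 *.
  rewrite qBz nz in qBz0; rewrite qAx in hx1 hx2; rewrite qBy in hy1 hy2.
  nra.
have al1 : al <= 1 by nra.
set S := \sum_i (x 0 i - y 0 i) ^+ 2.
have SE : S = 2 - 2 * al.
  have -> : S = bf 1%:M (x - y) (x - y).
    by rewrite bf1E; apply: eq_bigr => i _; rewrite !mxE expr2.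
  rewrite !bfBl !bfBr ux' uy' (bf1sym y x) -/al; ring.
have goal1 : S <= 8 * Num.sqrt e / g.
  rewrite ler_pdivlMr // SE; nra.
split; first exact: goal1.
set T := \sum_i `|x 0 i ^+ 2 - y 0 i ^+ 2|.
have T0 : 0 <= T by apply: sumr_ge0 => i _; exact: normr_ge0.
have S0 : 0 <= S by apply: sumr_ge0 => i _; exact: sqr_ge0.
have TE : T = \sum_i `|x 0 i - y 0 i| * (x 0 i + y 0 i).
  apply: eq_bigr => i _; rewrite subr_sqr normrM (ger0_norm (addr_ge0 (x0 i) (y0 i))).
  done.
have P4 : \sum_i (x 0 i + y 0 i) ^+ 2 = 4 - S.
  transitivity (\sum_i (2 * x 0 i ^+ 2 + 2 * y 0 i ^+ 2 - (x 0 i - y 0 i) ^+ 2)).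
    by apply: eq_bigr => i _; ring.
  rewrite sumrB big_split /= -!mulr_sumr ux uy -/S; ring.
have PS : \sum_i `|x 0 i - y 0 i| ^+ 2 = S.
  by apply: eq_bigr => i _; rewrite -normrX ger0_norm ?sqr_ge0.
have T2 : T ^+ 2 <= S * (4 - S) by rewrite TE -P4 -PS; exact: CS.
set W := Num.sqrt e / g.
have W0 : 0 <= W by rewrite /W divr_ge0 // ltW.
have SW : S <= 8 * W by rewrite /W mulrA.
set r := 8 * Num.sqrt (Num.sqrt e) / Num.sqrt g.
have r0 : 0 <= r by rewrite /r divr_ge0 ?mulr_ge0 ?sqrtr_ge0.
have r2 : r ^+ 2 = 64 * W.
  rewrite /r /W expr_div_n exprMn (sqr_sqrtr sqe0) (sqr_sqrtr (ltW g0)) mulrA.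
  by congr (_ * _ / _); rewrite expr2 -natrM.

have : T ^+ 2 <= r ^+ 2 by rewrite r2; nra.
move=> h; nra.
Qed.
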